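(* Let $f:\{0,1\}^n\to\{0,1\}$, and consider the following algorithm: (1) choose $k\in\{0,1,\dots,\lceil\log n\rceil\}$ uniformly at random and set $\ell:=2^k$; (2) choose $x\in\{0,1\}^n$ uniformly at random; (3) perform an $\ell$-step random walk $p$ on $H_n$ from $x$, ending at $y$; (4) if $f(x)\ne f(y)$, perform binary search on the vertex sequence of $p$ to find an influential edge $(u,v)$ of $p$, and REJECT if $(u,v)$ is a violating edge; (5) otherwise ACCEPT. Then, conditioned on the length chosen in step (1) being $\ell$, the algorithm rejects with probability $\Omega\!\left(\frac{\ell}{n}\cdot\frac{|F_\ell|}{2^n}\right)$, where $F_\ell$ is the set of edges $(x,y)$ of $H_n$ that are violating and such that both $x$ and $y$ are $\ell$-sticky.
   Context: $H_n$ is the undirected hypercube graph on $\{0,1\}^n$ (edges between points at Hamming distance $1$); a random walk step moves to a uniformly random neighbor. The coordinate-wise partial order is $\prec$. An edge $(x,y)$ is influential if $f(x)\ne f(y)$, and violating if $x\prec y$, $f(x)=1$, $f(y)=0$. A vertex $x$ is $\ell$-sticky if an $\ell$-step random walk on $H_n$ starting from $x$ traverses no influential edge with probability at least $1/2$. Binary search on a walk with vertices $x=z_0,\dots,z_\ell=y$ and $f(z_0)\ne f(z_\ell)$ returns some index $i$ with $f(z_i)\ne f(z_{i+1})$. Logarithms are base 2. *)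

(* Defs.v *)
From mathcomp Require Import all_boot all_order all_algebra.
Set Implicit Arguments. Unset Strict Implicit. Unset Printing Implicit Defensive.
Import Order.TTheory GRing.Theory Num.Theory.

Definition vertex (n : nat) := {ffun 'I_n -> bool}.

(* The neighbour of x obtained by flipping coordinate i. A uniformly random
   neighbour = flip along a uniformly random coordinate i : 'I_n. *)
Definition flip n (x : vertex n) (i : 'I_n) : vertex n :=
  [ffun j => if j == i then ~~ x j else x j].

Definition walk n (x : vertex n) (ds : seq 'I_n) : seq (vertex n) :=
  x :: scanl (@flip n) x ds.

Definition adjacent n (x y : vertex n) : bool := #|[set i | x i != y i]| == 1.

Definition prec n (x y : vertex n) : bool := [forall i, x i ==> y i] && (x != y).

Definition violating n (f : vertex n -> bool) (x y : vertex n) : bool :=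
  [&& prec x y, f x & ~~ f y].

Definition no_influential n (f : vertex n -> bool) (p : seq (vertex n)) : bool :=
  all (fun zz => f zz.1 == f zz.2) (zip p (behead p)).

Definition sticky n (f : vertex n -> bool) (l : nat) (x : vertex n) : bool :=
  (1 / 2%:R <= (#|[set ds : l.-tuple 'I_n | no_influential f (walk x ds)]|%:R
               / (n ^ l)%:R : rat))%R.

Definition F_set n (f : vertex n -> bool) (l : nat) : {set vertex n * vertex n} :=
  [set e | [&& adjacent e.1 e.2, violating f e.1 e.2, sticky f l e.1 & sticky f l e.2]].

Definition binsearch_spec n (f : vertex n -> bool) (bs : seq (vertex n) -> nat) :=
  forall (z : vertex n) (s : seq (vertex n)), f z != f (last z s) ->
    bs (z :: s) < size s /\ f (nth z (z :: s) (bs (z :: s))) != f (nth z (z :: s) (bs (z :: s)).+1).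

Definition rejects n (f : vertex n -> bool) (bs : seq (vertex n) -> nat)
    (x : vertex n) (ds : seq 'I_n) : bool :=
  let p := walk x ds in
  let i := bs p in
  (f x != f (last x p)) &&
  (violating f (nth x p i) (nth x p i.+1) || violating f (nth x p i.+1) (nth x p i)).

(* Rejection probability conditioned on the chosen length being l:
   x uniform in {0,1}^n, l i.i.d. uniform step directions. *)
Definition reject_prob n (f : vertex n -> bool) (bs : seq (vertex n) -> nat) (l : nat) : rat :=
  (#|[set xd : vertex n * l.-tuple 'I_n | rejects f bs xd.1 xd.2]|%:R
     / (2 ^ n * n ^ l)%:R)%R.

(* Main.v *)
Require Import Defs.
From mathcomp Require Import all_boot all_order all_algebra ring lra.
Set Implicit Arguments. Unset Strict Implicit. Unset Printing Implicit Defensive.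
Import Order.TTheory GRing.Theory Num.Theory.


Section Walk.
Variables (n : nat) (f : vertex n -> bool).

Definition pos (x : vertex n) (s : seq 'I_n) j := foldl (@flip n) x (take j s).

Lemma nth_walk y x s j : j <= size s -> nth y (walk x s) j = pos x s j.
Proof. move=> hj; rewrite /walk /pos (set_nth_default x); last by rewrite /= size_scanl ltnS.
exact: nth_cons_scanl. Qed.

Lemma last_walk x s : last x (walk x s) = pos x s (size s).
Proof. by rewrite (last_nth x) /= size_scanl -/(walk x s) nth_walk. Qed.

Lemma no_infP x s : reflect (forall j, j < size s -> f (pos x s j) = f (pos x s j.+1))
  (no_influential f (walk x s)).
Proof.
rewrite /no_influential.
have hs : size (walk x s) = (size s).+1 by rewrite /= size_scanl.
have hz : size (zip (walk x s) (behead (walk x s))) = size s.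
  by rewrite size_zip size_behead hs; apply/minn_idPr.
apply: (iffP (all_nthP (x, x))) => H j hj.
  have := H j; rewrite hz => /(_ hj); rewrite nth_zip_cond hz hj /= => /eqP.
  have -> : nth x (scanl (@flip n) x s) j = nth x (walk x s) j.+1 by [].
  by rewrite !nth_walk // ltnW.
rewrite hz in hj; rewrite nth_zip_cond hz hj /=.
have -> : nth x (scanl (@flip n) x s) j = nth x (walk x s) j.+1 by [].
by rewrite !nth_walk ?(ltnW hj) // H.
Qed.

Lemma flipE (x : vertex n) i c : flip x i c = x c (+) (c == i).
Proof. by rewrite /flip ffunE; case: (c == i); case: (x c). Qed.

Lemma foldl_flipE (x : vertex n) s c : foldl (@flip n) x s c = x c (+) odd (count_mem c s).
Proof.
elim: s x => [|i s IH] x /=; first by rewrite addbF.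
rewrite IH flipE oddD -addbA; congr (_ (+) _); rewrite eq_sym.
by case: (i == c); case: (odd _).
Qed.

Lemma pos_take (x : vertex n) s t j : j <= t -> pos x (take t s) j = pos x s j.
Proof. by move=> h; rewrite /pos take_takel. Qed.

End Walk.

Section Glue.
Variables (n : nat) (f : vertex n -> bool).

Lemma foldl_rev u (a : seq 'I_n) : foldl (@flip n) (foldl (@flip n) u a) (rev a) = u.
Proof. by apply/ffunP => c; rewrite !foldl_flipE count_rev -addbA addbb addbF. Qed.

Lemma glue_pos1 u i (a b : seq 'I_n) j : j <= size a ->
  pos (foldl (@flip n) u a) (rev a ++ i :: b) j = pos u a (size a - j).
Proof.
move=> hj; rewrite /pos takel_cat ?size_rev // take_rev.
apply/ffunP => c; rewrite !foldl_flipE count_rev.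
rewrite -{1}(cat_take_drop (size a - j) a) count_cat oddD.
by rewrite -!addbA addbb addbF.
Qed.

Lemma glue_pos2 u i (a b : seq 'I_n) j :
  pos (foldl (@flip n) u a) (rev a ++ i :: b) (size a + j.+1) = pos (flip u i) b j.
Proof.
rewrite /pos take_cat size_rev ltnNge leq_addr /= addKn foldl_cat foldl_rev.
by [].
Qed.

Lemma glue_C2 u i (a b : seq 'I_n) :
  no_influential f (walk u a) -> no_influential f (walk (flip u i) b) ->
  forall j, j < size (rev a ++ i :: b) -> j != size a ->
  f (pos (foldl (@flip n) u a) (rev a ++ i :: b) j) =
  f (pos (foldl (@flip n) u a) (rev a ++ i :: b) j.+1).
Proof.
move=> /no_infP ga /no_infP gb j hj hne.
case: (ltngtP j (size a)) hne => // hja _.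
  rewrite !glue_pos1 ?(ltnW hja) //.
  have hk : size a - j.+1 < size a by rewrite ltn_subrL (leq_ltn_trans _ hja).
  rewrite (ga _ hk) -subSn //.
have [j' ej] : exists j', j = size a + j'.+1.
  by exists (j - (size a).+1); rewrite addnS -addSn subnKC.
rewrite ej -addnS !glue_pos2 gb //.
move: hj; rewrite ej size_cat size_rev /= !addnS !ltnS.
by rewrite ltn_add2l.
Qed.

Lemma pos0 x (s : seq 'I_n) : pos x s 0 = x.
Proof. by rewrite /pos take0. Qed.

Lemma pos_size x (s : seq 'I_n) : pos x s (size s) = foldl (@flip n) x s.
Proof. by rewrite /pos take_size. Qed.

Lemma rejects_of bs x (ds : seq 'I_n) t :
  binsearch_spec f bs -> t < size ds ->
  violating f (pos x ds t) (pos x ds t.+1) ->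
  (forall j, j < size ds -> j != t -> f (pos x ds j) = f (pos x ds j.+1)) ->
  rejects f bs x ds.
Proof.
move=> hbs ht hv C2.
have hne : f (pos x ds t) != f (pos x ds t.+1).
  by move: hv; rewrite /violating => /and3P [_ -> ->].
have lo : forall j, j <= t -> f (pos x ds j) = f x.
  elim=> [|j IH] hj; first by rewrite pos0.
  by rewrite -C2 ?IH ?(ltnW hj) ?(leq_trans hj (ltnW ht)) // neq_ltn hj.
have hi : forall j, j <= size ds - t.+1 -> f (pos x ds (t.+1 + j)) = f (pos x ds t.+1).
  elim=> [|j IH] hj; first by rewrite addn0.
  rewrite addnS -C2 ?IH ?(ltnW hj) //.
    by move: hj; rewrite -ltn_subRL subnS.
  by rewrite neq_ltn ltnS leq_addr orbT.
have fend : f (last x (walk x ds)) = f (pos x ds t.+1).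
  rewrite last_walk -(subnKC ht) hi //.
have fx : f x = f (pos x ds t) by rewrite lo.
rewrite /rejects fend.
have hfx : f x != f (last x (scanl (@flip n) x ds)).
  by rewrite -[last x (scanl _ x ds)]/(last x (walk x ds)) fend fx.
have [hlt hneq] := hbs x (scanl (@flip n) x ds) hfx.
rewrite -/(walk x ds) in hlt hneq *.
rewrite size_scanl in hlt.
rewrite !nth_walk // in hneq *; try exact: ltnW.
have -> : bs (walk x ds) = t.
  apply/eqP; apply: contraLR hneq => hk; apply/negPn/eqP; exact: C2.
by rewrite fx hne hv.
Qed.

End Glue.

Lemma sum_disjoint (I T : finType) (P : {set I}) (A : I -> {set T}) (R : {set T}) :
  (forall j, j \in P -> A j \subset R) ->
  (forall j j' x, j \in P -> j' \in P -> x \in A j -> x \in A j' -> j = j') ->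
  \sum_(j in P) #|A j| <= #|R|.
Proof.
move=> sub dis.
have E : forall B : {set T}, #|B| = \sum_x (if x \in B then 1 else 0).
  by move=> B; rewrite -sum1_card big_mkcond.
under eq_bigr => j _ do rewrite E.
rewrite exchange_big E /=; apply: leq_sum => x _.
case: (pickP (fun j => (j \in P) && (x \in A j))) => [j0 /andP [j0P xA] | none].
  rewrite (bigD1 j0) //= xA (subsetP (sub j0 j0P) x xA) big1 // => j /andP [jP ne].
  by case: ifP => // xAj; rewrite (dis _ _ _ jP j0P xAj xA) eqxx in ne.
rewrite big1 // => j jP; by have := none j; rewrite jP /= => ->.
Qed.

Section Count.
Variables (n : nat) (f : vertex n -> bool).

Definition Good t (u : vertex n) := [set a : t.-tuple 'I_n | no_influential f (walk u a)].

Lemma good_prefix0 t L u : #|Good L u| <= #|Good (minn t L) u| * n ^ (L - t).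
Proof.
have -> : n ^ (L - t) = #|[set: (L - t).-tuple 'I_n]| by rewrite cardsT card_tuple card_ord.
rewrite -cardsX.
pose g := fun ds : L.-tuple 'I_n => ([tuple of take t ds], [tuple of drop t ds]).
rewrite -(@card_in_imset _ _ g); last first.
  move=> d1 d2 _ _ [e1 e2]; apply: val_inj => /=.
  by rewrite -(cat_take_drop t d1) -(cat_take_drop t d2) e1 e2.
apply: subset_leq_card; apply/subsetP => _ /imsetP [ds hds ->].
rewrite !inE andbT /=.
move: hds; rewrite inE => /no_infP H; apply/no_infP => j hj.
move: hj; rewrite size_take size_tuple => hj.
have hjt : j < t by move: hj; rewrite leq_min => /andP [].
have hjL : j < L by move: hj; rewrite leq_min => /andP [].
rewrite !pos_take //; last exact: ltnW. by apply: H; rewrite size_tuple.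
Qed.

Lemma good_prefix t L u : t <= L -> #|Good L u| <= #|Good t u| * n ^ (L - t).
Proof. by move=> h; have := good_prefix0 t L u; rewrite (minn_idPl h). Qed.

Lemma sticky_bound L u : 0 < n -> sticky f L u -> n ^ L <= 2 * #|Good L u|.
Proof.
move=> n0; rewrite /sticky -/(Good L u) => h.
have hp : (0 < (n ^ L)%:R :> rat)%R by rewrite ltr0n expn_gt0 n0.
rewrite ler_pdivlMr // in h.
rewrite -(ler_nat rat) natrM.
lra.
Qed.

End Count.

Lemma adj_flip n (x y : vertex n) : adjacent x y -> exists i, y = flip x i.
Proof.
rewrite /adjacent => /cards1P [i0 hi]; exists i0; apply/ffunP => c.
rewrite flipE.
have : (c \in [set i | x i != y i]) = (c == i0) by rewrite hi inE.
rewrite inE; case: (c == i0); case: (x c); case: (y c) => //=.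
Qed.

Lemma glue_sizeP n L (t : 'I_L) (i : 'I_n) (ab : t.-tuple 'I_n * (L - t.+1).-tuple 'I_n) :
  size (rev ab.1 ++ i :: ab.2) == L.
Proof.
rewrite size_cat size_rev /= !size_tuple addnS -addSn subnKC //.
Qed.

Definition glue_t n L (t : 'I_L) (u : vertex n) (i : 'I_n)
  (ab : t.-tuple 'I_n * (L - t.+1).-tuple 'I_n) : vertex n * L.-tuple 'I_n :=
  (foldl (@flip n) u ab.1, Tuple (@glue_sizeP n L t i ab)).

Lemma glue_inj n L (t : 'I_L) u i : injective (@glue_t n L t u i).
Proof.
move=> [a b] [a' b'] [] _ /eqP.
rewrite eqseq_cat ?size_rev ?size_tuple // => /andP [/eqP e1 /eqP [e2]].
have ea : a = a' by apply: val_inj; rewrite -[val a]revK e1 revK.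
by rewrite ea (val_inj e2).
Qed.

Lemma glue_char n (f : vertex n -> bool) L (t : 'I_L) u i ab :
  ab \in setX (Good f t u) (Good f (L - t.+1) (flip u i)) ->
  let xd := @glue_t n L t u i ab in
  [/\ pos xd.1 xd.2 t = u, pos xd.1 xd.2 t.+1 = flip u i &
      forall j, j < L -> j != t -> f (pos xd.1 xd.2 j) = f (pos xd.1 xd.2 j.+1)].
Proof.
case: ab => a b; rewrite !inE /= => /andP [ga gb].
have sa : size a = t by rewrite size_tuple.
split.
- by rewrite glue_pos1 sa ?subnn ?pos0.
- by have := glue_pos2 u i a b 0; rewrite pos0 sa addn1.
- move=> j hj hne; apply: glue_C2 => //.
    by rewrite size_cat size_rev /= !size_tuple addnS -addSn subnKC.
  by rewrite sa.
Qed.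

Lemma key_bound n (f : vertex n -> bool) (bs : seq (vertex n) -> nat) L :
  0 < n -> 0 < L -> binsearch_spec f bs ->
  #|F_set f L| * L * n ^ L.-1 <=
  4 * #|[set xd : vertex n * L.-tuple 'I_n | rejects f bs xd.1 xd.2]|.
Proof.
move=> n0 L0 hbs.
pose d0 : 'I_n := Ordinal n0.
pose dir (e : vertex n * vertex n) := odflt d0 [pick i | e.2 == flip e.1 i].
set F := F_set f L.
set R := [set xd | _].
have hdir : forall e, e \in F -> e.2 = flip e.1 (dir e).
  move=> e; rewrite inE => /and4P [ha _ _ _]; have [i hi] := adj_flip ha.
  by rewrite /dir; case: pickP => [j /eqP //|/(_ i)]; rewrite hi eqxx.
pose I := setX F [set: 'I_L].
pose A (j : (vertex n * vertex n) * 'I_L) : {set vertex n * L.-tuple 'I_n} :=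
  @glue_t n L j.2 j.1.1 (dir j.1) @: setX (Good f j.2 j.1.1) (Good f (L - j.2.+1) j.1.2).
have hI : forall j, j \in I -> j.1 \in F by move=> j; rewrite inE => /andP [].
have Achar : forall j xd, j \in I -> xd \in A j ->
   [/\ pos xd.1 xd.2 j.2 = j.1.1, pos xd.1 xd.2 (j.2).+1 = j.1.2 &
      forall k, k < L -> k != j.2 -> f (pos xd.1 xd.2 k) = f (pos xd.1 xd.2 k.+1)].
  move=> j xd jI /imsetP [ab hab ->].
  have e2 := hdir _ (hI _ jI).
  rewrite e2 in hab.
  have [c1 c2 c3] := glue_char hab.
  by split => //; rewrite c2 e2.
have Fviol : forall e, e \in F -> violating f e.1 e.2.
  by move=> e; rewrite inE => /and4P [].
have step1 : \sum_(j in I) #|A j| <= #|R|.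
  apply: sum_disjoint.
    move=> j jI; apply/subsetP => xd xA.
    have [c1 c2 c3] := Achar _ _ jI xA.
    rewrite inE; apply: (rejects_of (t := j.2) hbs).
    - by rewrite size_tuple.
    - by rewrite c1 c2; exact: Fviol (hI _ jI).
    - by move=> k; rewrite size_tuple; exact: c3.
  move=> [[u v] t] [[u' v'] t'] xd jI jI' xA xA'.
  have [c1 c2 c3] := Achar _ _ jI xA.
  have [c1' c2' c3'] := Achar _ _ jI' xA'.
  have hv := Fviol _ (hI _ jI); move: hv; rewrite /violating /= => /and3P [_ fu fv].
  have ett : t = t'.
    apply/val_inj/eqP; apply/negPn/negP => ne.
    have := c3' t (ltn_ord t) ne; rewrite c1 c2 /= fu => eq1.
    by rewrite -eq1 in fv.
  subst t'; move: c1 c2 c1' c2' => /= -> -> -> ->; by [].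
have step2 : forall j, j \in I -> n ^ L.-1 <= 4 * #|A j|.
  move=> [[u v] t] jI.
  have hF := hI _ jI; move: (hF); rewrite inE /= => /and4P [_ _ su sv].
  rewrite /A card_in_imset; last by move=> x y _ _; apply: glue_inj.
  rewrite cardsX /=.
  have tL : t <= L := ltnW (ltn_ord t).
  have h1 := leq_trans (@sticky_bound n f L u n0 su)
     (leq_mul (leqnn 2) (@good_prefix n f t L u tL)).
  have h2 := leq_trans (@sticky_bound n f L v n0 sv)
     (leq_mul (leqnn 2) (@good_prefix n f (L - t.+1) L v (leq_subr _ _))).
  rewrite subKn ?ltn_ord // in h2.
  set a := #|Good f t u| in h1 *; set b := #|Good f (L - t.+1) v| in h2 *.
  have eN : n ^ (L - t) * n ^ t.+1 = n ^ L.+1 by rewrite -expnD addnS subnK.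
  have eL : n ^ L * n ^ L = n ^ L.-1 * n ^ L.+1.
    by rewrite -!expnD addnS -addSn prednK.
  rewrite -(@leq_pmul2r (n ^ L.+1)) ?expn_gt0 ?n0 // -eL.
  apply: (leq_trans (leq_mul h1 h2)); rewrite -eN.
  have -> : 2 * (a * n ^ (L - t)) * (2 * (b * n ^ t.+1)) =
            4 * (a * b) * (n ^ (L - t) * n ^ t.+1) by ring.
  by [].
have step3 : \sum_(j in I) n ^ L.-1 <= \sum_(j in I) 4 * #|A j| by apply: leq_sum.
rewrite sum_nat_const -big_distrr /= in step3.
have cI : #|I| = #|F| * L by rewrite cardsX cardsT card_ord.
rewrite -cI; apply: (leq_trans step3); by rewrite leq_mul2l step1 orbT.
Qed.

Theorem lemma3p5 :
  exists c : rat, (0 < c)%R /\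
  forall (n : nat) (f : vertex n -> bool) (bs : seq (vertex n) -> nat) (k : nat),
    0 < n -> k <= up_log 2 n -> binsearch_spec f bs ->
    (c * ((2 ^ k)%:R / n%:R) * (#|F_set f (2 ^ k)|%:R / (2 ^ n)%:R)
       <= reject_prob f bs (2 ^ k))%R.
Proof.
exists (1 / 4)%R; split; first by [].
move=> n f bs k n0 _ hbs.
have L0 : 0 < 2 ^ k by rewrite expn_gt0.
have key := key_bound n0 L0 hbs.
rewrite /reject_prob.
move: key; set L := 2 ^ k; set a := #|F_set f L|; set r := #|[set xd | _]| => key.
have hnL : n ^ L = n * n ^ L.-1 by rewrite -expnS prednK.
have nz1 : (n%:R != 0 :> rat)%R by rewrite pnatr_eq0 -lt0n.
have nz2 : ((2 ^ n)%:R != 0 :> rat)%R by rewrite pnatr_eq0 -lt0n expn_gt0.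
have nz3 : ((n ^ L.-1)%:R != 0 :> rat)%R by rewrite pnatr_eq0 -lt0n expn_gt0 n0.
have -> : (1 / 4 * (L%:R / n%:R) * (a%:R / (2 ^ n)%:R) =
          ((a * L * n ^ L.-1)%:R / 4) / (2 ^ n * n ^ L)%:R :> rat)%R.
  rewrite hnL !natrM; field.
  by rewrite nz1 nz2 nz3.
apply: ler_wpM2r; first by rewrite invr_ge0 ler0n.
rewrite -(ler_nat rat) natrM in key.
lra.
Qed.
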